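(* Let $Y_1,\ldots,Y_n$ be i.i.d. Bernoulli with parameter $p=\mathbb{P}[Y_\ell=1]\in[0,\tfrac12]$, and let $\hat p(n)=\frac1n\sum_{\ell=1}^n\mathbb{1}\{Y_\ell=1\}$. Let $\delta\in(0,\tfrac12]$. If $n\geq 200\log(\frac4\delta)$, then with probability larger than $1-\delta$, \[ |h_b(\hat p(n))-h_b(p)|\leq \mathrm{UCD}_{\mathrm{ber}}(\hat p(n),\delta,n), \] where \[ \mathrm{UCD}_{\mathrm{ber}}(q,\delta,n):=\sqrt{\frac{12q\log(\frac6\delta)}{n}}\log\Bigl(\frac{n}{q\log(\frac6\delta)}\Bigr)+\frac{18\log(\frac6\delta)\log(n)}{n}, \] with the first term interpreted as $0$ when $q=0$.
   Context: $h_b(p):=-p\log p-(1-p)\log(1-p)$ is the binary entropy function (natural logarithm, $0\log 0=0$). *)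

(* Defs.v *)
From HB Require Import structures.
From mathcomp Require Import all_boot all_order all_algebra.
From mathcomp Require Import all_classical all_reals all_analysis.
Set Implicit Arguments. Unset Strict Implicit. Unset Printing Implicit Defensive.
Import Order.TTheory GRing.Theory Num.Theory.
Local Open Scope ring_scope.

Definition xlnx {R : realType} (x : R) : R := if x == 0 then 0 else x * ln x.

Definition hb {R : realType} (p : R) : R := - xlnx p - xlnx (1 - p).

(* Law of n i.i.d. Bernoulli(p) samples Y_1..Y_n, on the finite sample
   space {ffun 'I_n -> bool} (true = "Y_l = 1"):
   P[{y}] = prod_l (if y l then p else 1 - p). *)
Definition bern_weight {R : realType} (p : R) (n : nat)
  (y : {ffun 'I_n -> bool}) : R :=
  \prod_(l < n) (if y l then p else 1 - p).

Definition bern_prob {R : realType} (p : R) (n : nat)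
  (A : pred {ffun 'I_n -> bool}) : R :=
  \sum_(y | A y) bern_weight p y.

Definition phat {R : realType} (n : nat) (y : {ffun 'I_n -> bool}) : R :=
  (\sum_(l < n) (y l : nat)%:R) / n%:R.

Definition UCD_ber {R : realType} (q delta : R) (n : nat) : R :=
  (if q == 0 then 0
   else Num.sqrt (12 * q * ln (6 / delta) / n%:R)
        * ln (n%:R / (q * ln (6 / delta))))
  + 18 * ln (6 / delta) * ln (n%:R : R) / n%:R.

(* Main.v *)
Require Import Defs.
From HB Require Import structures.
From mathcomp Require Import all_boot all_order all_algebra.
From mathcomp Require Import all_classical all_reals all_analysis.
From mathcomp Require Import ring lra.
Import Order.TTheory GRing.Theory Num.Theory.
Local Open Scope ring_scope.

Section Det.
Variable R : realType.
Implicit Types x y d : R.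

Lemma lnle x y : 0 < x -> x <= y -> ln x <= ln y.
Proof.
move=> hx hxy; have hy : 0 < y by apply: lt_le_trans hxy.
by have := @ler_ln R x y; rewrite !posrE => /(_ hx hy) /= ->.
Qed.

Lemma xlnx0 : xlnx (0:R) = 0.
Proof. by rewrite /xlnx eqxx. Qed.

Lemma xlnx_gt0 x : 0 < x -> xlnx x = x * ln x.
Proof. by move=> hx; rewrite /xlnx gt_eqF. Qed.

Lemma lnB_le x y : 0 < x -> 0 < y -> ln y - ln x <= (y - x) / x.
Proof.
move=> hx hy; rewrite -ln_div ?posrE //.
have -> : y / x = 1 + (y - x) / x by rewrite mulrBl divff ?gt_eqF //; lra.
apply: le_ln1Dx.
rewrite mulrBl divff ?gt_eqF //.
have : 0 < y / x by apply: divr_gt0.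
lra.
Qed.

Lemma G1 x d : 0 <= x -> 0 <= d -> xlnx x + xlnx d <= xlnx (x + d).
Proof.
rewrite le0r => /orP[/eqP->|hx]; first by move=> _; rewrite xlnx0 !add0r.
rewrite le0r => /orP[/eqP->|hd]; first by rewrite xlnx0 !addr0.
have hxd : 0 < x + d by rewrite addr_gt0.
rewrite !xlnx_gt0 // mulrDl lerD //.
  by rewrite ler_pM2l // lnle // lerDl ltW.
by rewrite ler_pM2l // lnle // lerDr ltW.
Qed.

Lemma G2 x d : 0 <= x -> 0 <= d -> x + d <= 1 -> xlnx (x + d) - xlnx x <= d.
Proof.
move=> hx0 hd0 h1.
have lnle0 : ln (x + d) <= 0 by apply: ln_le0.
move: hx0; rewrite le0r => /orP[/eqP hx|hx].
  subst x; rewrite xlnx0 subr0 add0r.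
  move: hd0; rewrite le0r => /orP[/eqP->|hd]; first by rewrite xlnx0.
  rewrite xlnx_gt0 //; move: lnle0; rewrite add0r => hl.
  have : d * ln d <= 0 by rewrite mulr_ge0_le0 // ltW.
  lra.
have hxd : 0 < x + d by rewrite ltr_wpDr.
rewrite !xlnx_gt0 //.
have hb := @lnB_le _ _ hx hxd.
have e1 : x * (ln (x + d) - ln x) <= d.
  have := ler_wpM2l (ltW hx) hb.
  have -> : x + d - x = d by lra.
  by rewrite mulrCA divff ?gt_eqF // mulr1.
have e2 : d * ln (x + d) <= 0 by rewrite mulr_ge0_le0.
have -> : (x + d) * ln (x + d) - x * ln x = x * (ln (x + d) - ln x) + d * ln (x + d).
  by rewrite mulrBr mulrDl; lra.
lra.
Qed.

Definition phi x := x - xlnx x.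

Lemma hb_mono a b : 0 <= a -> a <= b -> b <= 1 -> `|hb b - hb a| <= phi (b - a).
Proof.
move=> ha hab hb1; set d := b - a.
have hd : 0 <= d by rewrite subr_ge0.
have eb : b = a + d by rewrite /d addrC subrK.
have g1 := G1 a d ha hd.
have g1' := G1 (1 - b) d. 
have g2 := G2 a d ha hd.
have g2' := G2 (1 - b) d.
have e1 : 1 - b + d = 1 - a by rewrite /d; lra.
rewrite e1 in g1' g2'.
have h1b : 0 <= 1 - b by lra.
have h1 : 1 - b + d <= 1 by lra.
rewrite e1 in h1.
have := g1' h1b hd; have := g2' h1b hd h1.
rewrite -eb in g1 g2. have := g2 hb1.
rewrite /hb /phi ler_norml => *; apply/andP; split; lra.
Qed.

Lemma hb_cont a b : 0 <= a <= 1 -> 0 <= b <= 1 -> `|hb b - hb a| <= phi `|b - a|.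
Proof.
move=> /andP[a0 a1] /andP[b0 b1].
case: (leP a b) => hab.
  have -> : `|b - a| = b - a by rewrite ger0_norm // subr_ge0.
  exact: hb_mono.
have -> : `|b - a| = a - b by rewrite ltr0_norm ?subr_lt0 // opprB.
by rewrite distrC hb_mono // ltW.
Qed.


Lemma phi0 : phi 0 = 0.
Proof. by rewrite /phi xlnx0 subr0. Qed.

Lemma phi_ge0 c : 0 <= c -> c <= 1 -> 0 <= phi c.
Proof.
rewrite le0r => /orP[/eqP->|hc] h1; first by rewrite phi0.
rewrite /phi xlnx_gt0 //.
have : c * ln c <= 0 by apply: mulr_ge0_le0; [exact: ltW | exact: ln_le0].
lra.
Qed.

Lemma phi_mono d c : 0 <= d -> d <= c -> c <= 1 -> phi d <= phi c.
Proof.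
rewrite le0r => /orP[/eqP->|hd] hdc hc1.
  by rewrite phi0 phi_ge0.
have hc : 0 < c by apply: lt_le_trans hdc.
rewrite /phi !xlnx_gt0 //.
have hb := lnB_le d c hd hc.
have e1 : d * (ln c - ln d) <= c - d.
  have := ler_wpM2l (ltW hd) hb.
  by rewrite mulrCA divff ?gt_eqF // mulr1.
have e2 : (c - d) * ln c <= 0 by apply: mulr_ge0_le0; [rewrite subr_ge0 | exact: ln_le0].
rewrite mulrBr in e1; rewrite mulrBl in e2.
lra.
Qed.

Lemma phi_sub A B : 0 <= A -> 0 <= B -> phi (A + B) <= phi A + phi B.
Proof. move=> hA hB; have := G1 A B hA hB; rewrite /phi; lra. Qed.

Lemma dev_bound (p q r a : R) : 0 <= p -> 0 <= q -> 0 < r -> 0 <= a -> a ^+ 2 = r * q ->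
  (q - p) ^+ 2 <= 8 * r * (p + 2 * r) -> `|q - p| <= 4 * a + 10 * r.
Proof.
move=> hp hq hr ha ha2 hdev.
case: (leP p q) => hpq.
  rewrite ger0_norm ?subr_ge0 //.
  have h1 : (q - p) ^+ 2 <= (4 * a + 10 * r) ^+ 2.
    apply: (le_trans hdev).
    have : 8 * r * (p + 2 * r) <= 8 * r * (q + 2 * r) by rewrite ler_pM2l ?lerD2r // mulr_gt0.
    move=> h; apply: (le_trans h); nra.
  rewrite -ler_sqr ?nnegrE ?subr_ge0 //; nra.
rewrite ltr0_norm ?subr_lt0 // opprB.
rewrite leNgt; apply/negP => hc.
set d := p - q in hc hdev.
have hpd : p = q + d by rewrite /d; lra.
rewrite hpd in hdev.
have hd2 : (q - (q + d)) ^+ 2 = d ^+ 2 by rewrite -sqrrN; congr (_ ^+ 2); lra.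
rewrite hd2 in hdev.
have h3 : 0 < (d - (4 * a + 10 * r)) * (d + (4 * a + 10 * r) - 8 * r).
  apply: mulr_gt0; lra.
nra.
Qed.


Lemma e_le4 : expR (1:R) <= 4.
Proof.
have h := expR_ge1Dx (- (1/2) : R).
rewrite expRN in h.
have hE : 0 < expR (1/2 : R) := expR_gt0 _.
have h2 : expR (1/2 : R) <= 2.
  have : 1 / 2 <= (expR (1 / 2 : R))^-1 by lra.
  rewrite -[X in X <= _ -> _]invf_div; rewrite lef_pV2 ?posrE //; lra.
have -> : (1:R) = 1/2 + 1/2 by lra.
rewrite expRD; nra.
Qed.

Lemma ln_ge1 (x : R) : 4 <= x -> 1 <= ln x.
Proof.
move=> hx; rewrite -[X in X <= _](expRK (1:R)).
apply: lnle; first exact: expR_gt0.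
exact: le_trans e_le4 hx.
Qed.

Lemma det (p q L N : R) : 0 <= p -> p <= 1 -> 0 <= q -> q <= 1 -> 1 <= L -> 100 * L <= N ->
  (q - p) ^+ 2 <= 8 * (L / N) * (p + 2 * (L / N)) ->
  `|hb q - hb p| <=
   (if q == 0 then 0 else Num.sqrt (12 * q * L / N) * ln (N / (q * L)))
   + 18 * L * ln N / N.
Proof.
move=> hp0 hp1 hq0 hq1 hL hN hdev.
have hN0 : 0 < N by lra.
set r := L / N.
have hr : 0 < r by rewrite /r divr_gt0 //; lra.
have hr1 : r <= 1/100.
  rewrite /r ler_pdivrMr //; lra.
have hqr : 0 <= r * q by rewrite mulr_ge0 // ltW.
set a := Num.sqrt (r * q).
have ha0 : 0 <= a := sqrtr_ge0 _.
have ha2 : a ^+ 2 = r * q by rewrite sqr_sqrtr.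
have hd := dev_bound p q r a hp0 hq0 hr ha0 ha2 hdev.
have ha1 : a <= 1/10 by nra.
have hc1 : 4 * a + 10 * r <= 1 by lra.
have step1 := hb_cont p q.
have : `|hb q - hb p| <= phi (4 * a) + phi (10 * r).
  apply: (le_trans (hb_cont p q _ _)); first by rewrite hp0 hp1.
    by rewrite hq0 hq1.
  apply: (le_trans (phi_mono _ _ (normr_ge0 _) hd hc1)).
  apply: phi_sub; lra.
move=> hmain; apply: (le_trans hmain); apply: lerD.
  case: eqP => [hq|/eqP hq].
    have -> : a = 0 by rewrite /a hq mulr0 sqrtr0.
    by rewrite mulr0 phi0.
  have hqp : 0 < q by rewrite lt_neqAle eq_sym hq.
  have hapos : 0 < a by rewrite /a sqrtr_gt0 mulr_gt0.
  have -> : 12 * q * L / N = 12 * (r * q) by rewrite /r; field; lra.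
  rewrite sqrtrM; last lra.
  have -> : N / (q * L) = (a ^+ 2)^-1.
    by rewrite ha2 /r; field; apply/and3P; split => //; rewrite gt_eqF //; lra.
  rewrite -/a lnV ?posrE ?exprn_gt0 // lnXn //.
  rewrite /phi xlnx_gt0; last lra.
  rewrite lnM ?posrE //.
  have l4 : 1 <= ln (4:R) by apply: ln_ge1.
  have lna : ln a <= 0 by apply: ln_le0; lra.
  have s12 : 2 <= Num.sqrt (12:R).
    have -> : (2:R) = Num.sqrt 4.
      by rewrite -[X in Num.sqrt X](_ : 2 ^+ 2 = 4) ?sqrtr_sqr ?ger0_norm //; lra.
    by rewrite ler_wsqrtr //; lra.
  have h0 : 0 <= - (a * ln a) by rewrite oppr_ge0 mulr_ge0_le0 // ltW.
  rewrite mulr2n; nra.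
have hr10 : 0 < 10 * r by lra.
rewrite /phi xlnx_gt0 //.
have -> : 10 * r = 10 * L / N by rewrite /r mulrA.
rewrite ln_div ?posrE //; try lra.
rewrite lnM ?posrE //; try lra.
have l10 : 1 <= ln (10:R) by apply: ln_ge1; lra.
have lL : 0 <= ln L by apply: ln_ge0.
have lN : 0 <= ln N by apply: ln_ge0; lra.
have -> : 18 * L * ln N / N = 18 * r * ln N by rewrite /r; field; lra.
have -> : 10 * L / N = 10 * r by rewrite /r mulrA.
nra.
Qed.

End Det.

Section Prob.
Variable R : realType.
Variables (p : R) (n : nat).
Hypotheses (hp0 : 0 <= p) (hp1 : p <= 1).

Definition Ssum (y : {ffun 'I_n -> bool}) : R := \sum_(l < n) (y l : nat)%:R.

Lemma w_ge0 (y : {ffun 'I_n -> bool}) : 0 <= bern_weight p y.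
Proof. rewrite /bern_weight; apply: prodr_ge0 => l _; case: (y l) => //=; by rewrite subr_ge0. Qed.

Lemma mgf (x : R) :
  \sum_(y : {ffun 'I_n -> bool}) bern_weight p y * expR (x * Ssum y) = (p * expR x + (1 - p)) ^+ n.
Proof.
transitivity (\sum_(y : {ffun 'I_n -> bool})
   \prod_(l < n) (if y l then p * expR x else 1 - p)).
  apply: eq_bigr => y _.
  rewrite /Ssum mulr_sumr expR_sum /bern_weight -big_split /=.
  apply: eq_bigr => l _; case: (y l) => /=.
    by rewrite mulr1.
  by rewrite mulr0 expR0 mulr1.
rewrite -(bigA_distr_bigA (fun (l : 'I_n) (b : bool) => if b then p * expR x else 1 - p)) /=.
rewrite (eq_bigr (fun _ => p * expR x + (1 - p))); last by move=> l _; rewrite big_bool.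
by rewrite prodr_const card_ord.
Qed.

Lemma wsum1 : \sum_(y : {ffun 'I_n -> bool}) bern_weight p y = 1.
Proof.
have := mgf 0; rewrite expR0 mulr1.
have -> : p + (1 - p) = 1 by lra.
rewrite expr1n => <-; apply: eq_bigr => y _.
by rewrite mul0r expR0 mulr1.
Qed.


Lemma exp_le (u : R) : u <= 1/2 -> expR u <= 1 + u + 2 * u ^+ 2.
Proof.
move=> hu.
have h := expR_ge1Dx (- u); rewrite expRN in h.
have hE : 0 < expR u := expR_gt0 u.
have h2 : (1 - u) * expR u <= 1.
  have := ler_wpM2r (ltW hE) h; rewrite mulVf ?gt_eqF //; lra.
have h3 : 0 <= u ^+ 2 * (1 - 2 * u) by apply: mulr_ge0; [exact: sqr_ge0 | lra].
nra.
Qed.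

Lemma coord (u : R) : u <= 1/2 -> p * expR u + (1 - p) <= expR (p * u + 2 * p * u ^+ 2).
Proof.
move=> hu; have h := exp_le u hu.
apply: le_trans (expR_ge1Dx _).
have : p * expR u <= p * (1 + u + 2 * u ^+ 2) by apply: ler_wpM2l.
lra.
Qed.

Definition N : R := n%:R.

Lemma mgf_bound (u : R) : u <= 1/2 ->
  \sum_(y : {ffun 'I_n -> bool}) bern_weight p y * expR (u * (Ssum y - N * p))
   <= expR (2 * N * p * u ^+ 2).
Proof.
move=> hu.
rewrite (eq_bigr (fun y => expR (- (u * N * p)) * (bern_weight p y * expR (u * Ssum y)))); last first.
  move=> y _; rewrite mulrCA -expRD; congr (_ * expR _); ring.
rewrite -mulr_sumr mgf.
have hc := coord u hu.
have h0 : 0 <= p * expR u + (1 - p).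
  by rewrite addr_ge0 ?subr_ge0 // mulr_ge0 // expR_ge0.
have := lerXn2r n (x := p * expR u + (1 - p)) (y := expR (p * u + 2 * p * u ^+ 2)).
rewrite !nnegrE h0 expR_ge0 hc => /(_ isT isT) /= hpow.
rewrite -expRM_natl in hpow.
have {}hpow := hpow isT. apply: le_trans (ler_wpM2l (expR_ge0 _) hpow) _.
rewrite -expRD /N; rewrite le_eqVlt; apply/orP; left; apply/eqP; congr expR; ring.
Qed.

Lemma tail (u c : R) : u <= 1/2 ->
  bern_prob p (fun y : {ffun 'I_n -> bool} => c <= u * (Ssum y - N * p))
  <= expR (2 * N * p * u ^+ 2 - c).
Proof.
move=> hu; rewrite /bern_prob.
apply: (@le_trans _ _ (\sum_(y : {ffun 'I_n -> bool}) bern_weight p y * expR (u * (Ssum y - N * p) - c))).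
  rewrite big_mkcond /=; apply: ler_sum => y _.
  case: ifP => hy; last by rewrite mulr_ge0 ?w_ge0 ?expR_ge0.
  rewrite -[X in X <= _]mulr1 ler_wpM2l ?w_ge0 //.
  by rewrite -expR0 ler_expR subr_ge0.
rewrite (eq_bigr (fun y => expR (- c) * (bern_weight p y * expR (u * (Ssum y - N * p))))); last first.
  by move=> y _; rewrite mulrCA -expRD addrC.
rewrite -mulr_sumr.
apply: le_trans (ler_wpM2l (expR_ge0 _) (mgf_bound u hu)) _.
by rewrite -expRD addrC.
Qed.

End Prob.

Theorem proposition2 (R : realType) (p delta : R) (n : nat) :
  0 <= p -> p <= 1 / 2 ->
  0 < delta -> delta <= 1 / 2 ->
  200 * ln (4 / delta) <= n%:R ->
  1 - delta <
    bern_prob p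
      (fun y : {ffun 'I_n -> bool} =>
         `|hb (phat y) - hb p| <= UCD_ber (phat y) delta n).
Proof.
move=> hp0 hp12 hd0 hd12 hn.
have hp1 : p <= 1 by lra.
set L := ln (6 / delta).
set Nr : R := n%:R.
have h4d : 8 <= 4 / delta.
  rewrite ler_pdivlMr //; lra.
have hL4 : L <= 2 * ln (4 / delta).
  rewrite /L; have -> : 6 / delta = (3/2) * (4 / delta) by field; rewrite gt_eqF.
  rewrite lnM ?posrE //; last by apply: divr_gt0 => //; lra.
  have : ln (3/2 : R) <= ln (4 / delta) by apply: lnle; lra.
  lra.
have hL1 : 1 <= L.
  apply: ln_ge1; rewrite ler_pdivlMr //; lra.
have hNL : 100 * L <= Nr by rewrite /Nr; lra.
have hN0 : 0 < Nr by lra.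
set u0 := Nr * p.
have hu0 : 0 <= u0 by rewrite mulr_ge0 // ltW.
set V := u0 + 2 * L.
have hV : 0 < V by rewrite /V; lra.
set t := Num.sqrt (L / (2 * V)).
have hLV : 0 <= L / (2 * V) by apply: divr_ge0; lra.
have ht2 : t ^+ 2 = L / (2 * V) by rewrite sqr_sqrtr.
have ht0 : 0 <= t := sqrtr_ge0 _.
have htV : t ^+ 2 * (2 * V) = L by rewrite ht2 divfK // gt_eqF //; lra.
have ht14 : t ^+ 2 <= 1/4.
  rewrite ht2 ler_pdivrMr; last lra.
  rewrite /V; lra.
have ht12 : t <= 1/2 by nra.
have htp : 0 < t.
  rewrite lt_neqAle ht0 andbT; apply/eqP => ht.
  by move: htV; rewrite -ht expr0n /= mul0r; lra.
have hexp : 2 * Nr * p * t ^+ 2 - 2 * L <= - L.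
  rewrite -/u0 in htV *; have : u0 * t ^+ 2 <= V * t ^+ 2.
    by apply: ler_wpM2r; [exact: sqr_ge0 | rewrite /V; lra].
  have -> : 2 * Nr * p * t ^+ 2 = 2 * u0 * t ^+ 2 by rewrite /u0; ring.
  nra.
have heL : expR (- L) = delta / 6.
  rewrite expRN /L lnK ?posrE; last by apply: divr_gt0 => //; lra.
  by rewrite invf_div.
have T1 := tail R p n hp0 hp1 t (2 * L) ht12.
have hmt : - t <= 1/2 by lra.
have T2 := tail R p n hp0 hp1 (- t) (2 * L) hmt.
rewrite sqrrN in T2.
have hexp' : expR (2 * N R n * p * t ^+ 2 - 2 * L) <= expR (- L) by rewrite ler_expR.
have E1 := le_trans T1 hexp'.
have E2 := le_trans T2 hexp'.
rewrite heL in E1 E2.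
set G := fun y : {ffun 'I_n -> bool} => (Ssum R n y - Nr * p) ^+ 2 <= 8 * L * (Nr * p + 2 * L).
have Hsplit := wsum1 R p n.
rewrite (bigID G) /= in Hsplit.
have Hbad : \sum_(y | ~~ G y) bern_weight p y <=
    bern_prob p (fun y : {ffun 'I_n -> bool} => 2 * L <= t * (Ssum R n y - N R n * p)) +
    bern_prob p (fun y : {ffun 'I_n -> bool} => 2 * L <= - t * (Ssum R n y - N R n * p)).
  rewrite /bern_prob !(big_mkcond (fun y => ~~ G y)) (big_mkcond (fun y => _ <= t * _))
     (big_mkcond (fun y => _ <= - t * _)) -big_split /=.
  apply: ler_sum => y _.
  have hw := w_ge0 R p n hp0 hp1 y.
  case: ifP => hG; last by rewrite addr_ge0 //; case: ifP.
  move: hG; rewrite /G -ltNge /N -/Nr => hK.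
  set D := Ssum R n y - Nr * p in hK *.
  case: ifP => h1; first by case: ifP; lra.
  case: ifP => h2; first lra.
  exfalso; move/negbT: h1; move/negbT: h2; rewrite -!ltNge => h2 h1.
  have hK' : t ^+ 2 * (8 * L * (Nr * p + 2 * L)) = 4 * L ^+ 2.
    rewrite -/u0 -/V; have -> : 8 * L * V = 4 * L * (2 * V) by ring.
    by rewrite mulrCA htV; ring.
  have : t ^+ 2 * (8 * L * (Nr * p + 2 * L)) < t ^+ 2 * D ^+ 2.
    by rewrite ltr_pM2l // exprn_gt0.
  rewrite hK'; nra.
have Hgood : \sum_(y | G y) bern_weight p y <=
    bern_prob p (fun y : {ffun 'I_n -> bool} =>
         `|hb (phat y) - hb p| <= UCD_ber (phat y) delta n).
  rewrite /bern_prob (big_mkcond G) (big_mkcond (fun y => `|_| <= _)) /=.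
  apply: ler_sum => y _.
  have hw := w_ge0 R p n hp0 hp1 y.
  case: ifP => hG; last by case: ifP.
  suff -> : `|hb (phat y) - hb p| <= UCD_ber (phat y) delta n by [].
  have hS0 : 0 <= Ssum R n y by apply: sumr_ge0 => l _; exact: ler0n.
  have hSn : Ssum R n y <= Nr.
    rewrite /Ssum /Nr -[X in _ <= X%:R]card_ord -sum1_card natr_sum.
    by apply: ler_sum => l _; case: (y l).
  have -> : phat y = Ssum R n y / Nr by [].
  apply: det => //.
  - by apply: divr_ge0 => //; exact: ltW.
  - by rewrite ler_pdivrMr // mul1r.
  - have e1 : (Ssum R n y / Nr - p) ^+ 2 = (Ssum R n y - Nr * p) ^+ 2 / Nr ^+ 2.
      by field; rewrite gt_eqF.
    have e2 : 8 * (L / Nr) * (p + 2 * (L / Nr)) = 8 * L * (Nr * p + 2 * L) / Nr ^+ 2.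
      by field; rewrite gt_eqF.
    rewrite e1 e2 ler_pM2r //; last by rewrite invr_gt0 exprn_gt0.
lra.
Qed.
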